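(* Fix $b\in\mathbb{N}$. Any $b$-pattern $P$ consisting of crosses and exactly one circle is realizable in $L=\mathbb{N}\times\mathbb{N}$. Consequently, the graph $G_b$ is not connected.
   Context: For $r,s\in\mathbb{N}$, $\gcd_b(r,s)=\max\{k\in\mathbb{N} : k\mid r \text{ and } k^b\mid s\}$; a point $(r,s)\in L$ is $b$-visible if $\gcd_b(r,s)=1$ and $b$-invisible otherwise. A $b$-pattern $P$ is obtained by choosing a positive integer $w$ and assigning to each $(r,s)\in L$ with $1\le r\le w$, $1\le s\le w^b$ either a cross, a circle, or neither. $P$ is realizable in $L$ if there is $(u,v)\in L$ such that $(u+r,v+s)$ is $b$-visible for every circle $(r,s)$ of $P$ and $b$-invisible for every cross $(r,s)$ of $P$. The graph $G_b$ has as vertices the $b$-visible points of $L$, with an edge between two such points whenever their Euclidean distance is $1$. *)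

(* Defs.v *)
From mathcomp Require Import all_boot.
Set Implicit Arguments. Unset Strict Implicit. Unset Printing Implicit Defensive.

(* Convention: N = {1,2,3,...}; L = N x N, represented by pairs of nats
   with both coordinates positive. *)

(* gcd_b(r,s) = max { k in N : k | r and k^b | s }  (for r >= 1 every such k
   is <= r, and k = 1 always qualifies). *)
Definition gcdb (b r s : nat) : nat :=
  \max_(k < r.+1 | (0 < k) && (k %| r) && (k ^ b %| s)) k.

Definition bvisible (b r s : nat) : bool := gcdb b r s == 1.

Definition inL (p : nat * nat) : bool := (0 < p.1) && (0 < p.2).

(* A b-pattern of width w: each (r,s) with 1<=r<=w, 1<=s<=w^b gets
   Some true (circle), Some false (cross) or None (neither).
   Values outside the box are irrelevant. *)
Definition pattern := nat -> nat -> option bool.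

Definition in_box (b w r s : nat) : Prop :=
  1 <= r <= w /\ 1 <= s <= w ^ b.

Definition realizable (b w : nat) (P : pattern) : Prop :=
  exists u v : nat, inL (u, v) /\
    forall r s, in_box b w r s ->
      (P r s = Some true -> bvisible b (u + r) (v + s)) /\
      (P r s = Some false -> ~~ bvisible b (u + r) (v + s)).

(* P consists of crosses and exactly one circle (other points may be
   crosses or unmarked). *)
Definition crosses_and_one_circle (b w : nat) (P : pattern) : Prop :=
  (exists r0 s0, in_box b w r0 s0 /\ P r0 s0 = Some true) /\
  (forall r s r' s', in_box b w r s -> in_box b w r' s' ->
     P r s = Some true -> P r' s' = Some true -> r = r' /\ s = s').

Definition Gb_vertex (b : nat) (p : nat * nat) : bool :=
  inL p && bvisible b p.1 p.2.

Definition unit_dist (p q : nat * nat) : bool :=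
  ((p.1 == q.1) && ((p.2 == q.2.+1) || (q.2 == p.2.+1))) ||
  ((p.2 == q.2) && ((p.1 == q.1.+1) || (q.1 == p.1.+1))).

Definition Gb_edge (b : nat) : rel (nat * nat) :=
  fun p q => [&& Gb_vertex b p, Gb_vertex b q & unit_dist p q].

Definition Gb_connected (b : nat) : Prop :=
  forall p q, Gb_vertex b p -> Gb_vertex b q ->
    exists s : seq (nat * nat), path (Gb_edge b) p s /\ last p s = q.

(* Main.v *)
Require Import Defs.
From mathcomp Require Import all_boot.
From mathcomp Require Import zify.

Lemma bvisibleP b x y : 0 < x ->
  reflect (forall k, 1 < k -> k %| x -> k ^ b %| y -> False) (bvisible b x y).
Proof.
move=> x0; rewrite /bvisible /gcdb.
apply: (iffP eqP).
- move=> H k k1 kx ky.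
  have kle : k < x.+1 by rewrite ltnS dvdn_leq.
  have := @leq_bigmax_cond _ (fun i : 'I_x.+1 => (0 < i) && (i %| x) && (i ^ b %| y))
     (fun i => nat_of_ord i) (Ordinal kle).
  rewrite /= kx ky (ltnW k1) H => /(_ isT). by rewrite leqNgt k1.
- move=> H; apply/eqP; rewrite eqn_leq; apply/andP; split.
  + apply/bigmax_leqP => i /andP[/andP[i0 ix] iy].
    rewrite leqNgt; apply/negP => i1; exact: (H i).
  + have o1 : 1 < x.+1 by rewrite ltnS.
    have := @leq_bigmax_cond _ (fun i : 'I_x.+1 => (0 < i) && (i %| x) && (i ^ b %| y))
     (fun i => nat_of_ord i) (Ordinal o1).
    by rewrite /= dvd1n exp1n dvd1n; apply.
Qed.

Lemma dvd_tr {d m x y} c : d %| m -> x = y %[mod m] -> (d %| x + c) = (d %| y + c).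
Proof.
move=> dm e.
by rewrite /dvdn -modnDml -(modn_dvdm x dm) e (modn_dvdm y dm) modnDml.
Qed.

Lemma copart n : forall A, 0 < A -> exists A2,
  [/\ A2 %| A, coprime A2 n & forall q, prime q -> q %| A -> ~~ (q %| n) -> q %| A2].
Proof.
move=> A; elim: A {-2}A (leqnn A) => [|N IH] A leAN A0.
  by move: leAN; rewrite leqn0 => /eqP Ae; rewrite Ae in A0.
case co: (coprime A n).
  by exists A; split.
have g0 : 0 < gcdn A n by rewrite gcdn_gt0 A0.
have g1 : 1 < gcdn A n by move: co; rewrite /coprime; lia.
set q := pdiv (gcdn A n).
have pq : prime q by apply: pdiv_prime.
have qg : q %| gcdn A n by apply: pdiv_dvd.
have qA : q %| A by apply: dvdn_trans qg (dvdn_gcdl _ _).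
have qn : q %| n by apply: dvdn_trans qg (dvdn_gcdr _ _).
have q1 : 1 < q by apply: prime_gt1.
have Ae : A = A %/ q * q by rewrite divnK.
have A00 : 0 < A %/ q by rewrite divn_gt0 ?(prime_gt0 pq) // dvdn_leq.
have lt : A %/ q < A by apply: ltn_Pdiv.
have [A2 [h1 h2 h3]] := IH (A %/ q) (leq_trans lt leAN) A00.
exists A2; split => //.
  by exact: dvdn_trans h1 (dvdn_div qA).
move=> p pp pA pn. apply: h3 => //.
move: pA; rewrite {1}Ae Euclid_dvdM // => /orP[//|pdq].
move: pdq; rewrite dvdn_prime2 // => /eqP pe.
by rewrite pe qn in pn.
Qed.

Lemma far {q K M x a a'} : prime q -> q %| K`! * M + 1 -> q %| x + a -> q %| x + a' ->
  a < a' -> a' <= K -> False.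
Proof.
move=> pq qk h1 h2 lt le.
have : q %| (x + a') - (x + a) by apply: dvdn_sub.
rewrite subnDl => qd.
have : q %| K`!.
  apply: (dvdn_trans qd); apply: dvdn_fact; apply/andP; split; first by rewrite subn_gt0.
  by apply: leq_trans (leq_subr _ _) le.
move=> qf. move: qk; rewrite dvdn_addr ?dvdn_mulr // dvdn1 => /eqP q1.
by rewrite q1 in pq.
Qed.

Lemma build b r0 s0 K (hb : 0 < b) (hr0 : r0 <= K) (hs0 : s0 <= K) :
  forall cs : seq (nat * nat),
  (forall c, c \in cs -> [/\ c != (r0, s0), c.1 <= K & c.2 <= K]) ->
  exists u v M, [/\ 0 < M,
     forall q, prime q -> q %| M -> ~~ ((q %| u + r0) && (q %| v + s0)) &
     forall c, c \in cs -> exists k, [/\ 1 < k, k %| M, k %| u + c.1 & k ^ b %| v + c.2]].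
Proof.
elim=> [|[r s] cs IH] Hcs.
  exists 0, 0, 1; split => // q pq; rewrite dvdn1 => /eqP q1; by rewrite q1 in pq.
have [|u [v [M [M0 Hc Hx]]]] := IH.
  by move=> c cin; apply: Hcs; rewrite inE cin orbT.
have [cne rK sK] := Hcs (r, s) (mem_head _ _).
set k := K`! * M + 1.
have k1 : 1 < k by rewrite /k addn1 ltnS muln_gt0 fact_gt0 M0.
have cop : coprime M k by rewrite /coprime /k gcdnMDl gcdn1.
have copb : coprime (M ^ b) (k ^ b) by apply: coprimeXl; apply: coprimeXr.
set u' := chinese M k u ((k - 1) * r).
set v' := chinese (M ^ b) (k ^ b) v ((k ^ b - 1) * s).
have eu : u' = u %[mod M] by apply: chinese_modl.
have ev : v' = v %[mod M ^ b] by apply: chinese_modl.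
have eu2 : u' = (k - 1) * r %[mod k] by apply: chinese_modr.
have ev2 : v' = (k ^ b - 1) * s %[mod k ^ b] by apply: chinese_modr.
have kb0 : 0 < k ^ b by rewrite expn_gt0 (ltnW k1).
have ku : k %| u' + r.
  rewrite (dvd_tr r (dvdnn k) eu2).
  have -> : (k - 1) * r + r = k * r by rewrite mulnBl mul1n subnK // leq_pmull // ltnW.
  exact: dvdn_mulr.
have kv : k ^ b %| v' + s.
  rewrite (dvd_tr s (dvdnn _) ev2).
  have -> : (k ^ b - 1) * s + s = k ^ b * s by rewrite mulnBl mul1n subnK // leq_pmull.
  exact: dvdn_mulr.
exists u', v', (M * k); split.
- by rewrite muln_gt0 M0 (ltnW k1).
- move=> q pq; rewrite Euclid_dvdM // => /orP[qM|qk].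
  + rewrite (dvd_tr r0 qM eu) (dvd_tr s0 (dvdn_exp hb qM) ev). exact: Hc.
  + apply/negP => /andP[q1 q2].
    have qu : q %| u' + r by apply: dvdn_trans qk ku.
    have qv : q %| v' + s by apply: dvdn_trans qk (dvdn_trans (dvdn_exp hb (dvdnn k)) kv).
    move: cne; case: (ltngtP r r0) => hr.
    * by move=> _; apply: (far pq qk qu q1 hr hr0).
    * by move=> _; apply: (far pq qk q1 qu hr rK).
    * rewrite hr; case: (ltngtP s s0) => hs.
      - by move=> _; apply: (far pq qk qv q2 hs hs0).
      - by move=> _; apply: (far pq qk q2 qv hs sK).
      - by rewrite hs eqxx.
- move=> c; rewrite inE => /orP[/eqP ->|cin].
  + exists k; split => //; exact: dvdn_mull.
  + have [k' [k1' kM ku' kv']] := Hx c cin.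
    exists k'; split => //.
    * exact: dvdn_mulr.
    * by rewrite (dvd_tr _ kM eu).
    * rewrite (dvd_tr _ _ ev) //. exact: dvdn_exp2r.
Qed.

Lemma part1 b (hb : 0 < b) (w : nat) (P : pattern) : 0 < w ->
     crosses_and_one_circle b w P -> realizable b w P.
Proof.
move=> w0 [[r0 [s0 [[/andP[r01 r0w] /andP[s01 s0w]] Pc]]] Huniq].
set K := w + w ^ b.
set cs := [seq c <- [seq (r, s) | r <- iota 1 w, s <- iota 1 (w ^ b)] | c != (r0, s0)].
have Hcs : forall c, c \in cs -> [/\ c != (r0, s0), c.1 <= K & c.2 <= K].
  move=> c; rewrite mem_filter => /andP[cne /allpairsP [[r s] /= [hr hs ce]]].
  subst c; move: hr hs; rewrite !mem_iota /K => hr hs; split => //=; lia.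
have hr0 : r0 <= K by rewrite /K; lia.
have hs0 : s0 <= K by rewrite /K; lia.
have [u [v [M [M0 Hc Hx]]]] := @build b r0 s0 K hb hr0 hs0 cs Hcs.
set u1 := u + M.
have eu : u1 = u %[mod M] by rewrite /u1 modnDr.
have A0 : 0 < u1 + r0 by rewrite /u1; lia.
have [A2 [A2d A2c A2p]] := @copart M (u1 + r0) A0.
have A20 : 0 < A2 by apply: dvdn_gt0 A2d; rewrite /u1; lia.
have cop : coprime (M ^ b) A2 by apply: coprimeXl; rewrite coprime_sym.
set v' := chinese (M ^ b) A2 v (1 + (A2 - 1) * s0).
set v1 := v' + M ^ b * A2.
have ev : v1 = v %[mod M ^ b].
  by rewrite /v1 (mulnC (M ^ b) A2) addnC modnMDl chinese_modl.
have ev2 : v1 = 1 + (A2 - 1) * s0 %[mod A2].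
  by rewrite /v1 addnC modnMDl chinese_modr.
have Mb0 : 0 < M ^ b by rewrite expn_gt0 M0.
exists u1, v1; split.
  by rewrite /inL /= /u1 /v1; apply/andP; split; [rewrite addn_gt0 M0 orbT | rewrite addn_gt0 muln_gt0 Mb0 A20 orbT].
have Hb0 : in_box b w r0 s0 by split; apply/andP; split.
move=> r s Hb; have [/andP[r1 rw] /andP[s1 sw]] := Hb; split.
- move=> Prs. have [-> ->] := Huniq _ _ _ _ Hb Hb0 Prs Pc.
  apply/bvisibleP; first exact: A0.
  move=> k k1 kA kB.
  set q := pdiv k.
  have pq : prime q by apply: pdiv_prime.
  have qA : q %| u1 + r0 by apply: dvdn_trans (pdiv_dvd k) kA.
  have qB : q %| v1 + s0.
    by apply: dvdn_trans (pdiv_dvd k) (dvdn_trans (dvdn_exp hb (dvdnn k)) kB).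
  case qM: (q %| M).
  + move: (Hc q pq qM).
    by rewrite -(dvd_tr _ qM eu) -(dvd_tr _ (dvdn_exp hb qM) ev) qA qB.
  + have qA2 : q %| A2 by apply: A2p => //; rewrite qM.
    move: qB; rewrite (dvd_tr _ qA2 ev2).
    have -> : 1 + (A2 - 1) * s0 + s0 = 1 + A2 * s0.
      by rewrite -addnA mulnBl mul1n subnK // leq_pmull.
    rewrite dvdn_addl ?dvdn_mulr // dvdn1 => /eqP q1.
    by rewrite q1 in pq.
- move=> Prs.
  have cin : (r, s) \in cs.
    rewrite mem_filter; apply/andP; split.
      apply/negP => /eqP [er es]; by rewrite er es Pc in Prs.
    apply/allpairsP; exists (r, s); split => //=; rewrite mem_iota add1n ltnS ?r1 ?s1 ?rw ?sw //.
  have [k [k1 kM ku kv]] := Hx _ cin.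
  apply/negP => /bvisibleP H. apply: (H _ k k1).
  + by rewrite addn_gt0 r1 orbT.
  + by rewrite (dvd_tr _ kM eu).
  + by rewrite (dvd_tr _ (dvdn_exp2r _ kM) ev).
Qed.

Lemma part2 b (hb : 0 < b) : ~ Gb_connected b.
Proof.
move=> Hconn.
pose P : pattern := fun r s => if (r == 2) && (s == 2) then Some true else Some false.
have h3 : 3 <= 3 ^ b by rewrite -{1}(expn1 3) leq_pexp2l.
have w0 : 0 < 3 by [].
have box : forall r s, 0 < r <= 3 -> 0 < s <= 3 -> in_box b 3 r s.
  move=> r s hr /andP[hs1 hs2]; split => //; apply/andP; split => //; exact: leq_trans hs2 h3.
have Hc : crosses_and_one_circle b 3 P.
  split; first by exists 2, 2; split => //; apply: box.
  move=> r s r' s' _ _; rewrite /P; case: ifP => // /andP[/eqP -> /eqP ->] _.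
  by case: ifP => // /andP[/eqP -> /eqP ->].
have [u [v [uv H]]] := @part1 b hb 3 P w0 Hc.
have vis : bvisible b (u + 2) (v + 2) by apply: (H 2 2 (box 2 2 isT isT)).1.
have inv : forall r s, 0 < r <= 3 -> 0 < s <= 3 -> (r, s) != (2, 2) -> ~~ bvisible b (u + r) (v + s).
  move=> r s hr hs ne; apply: (H r s (box r s hr hs)).2; rewrite /P.
  case: ifP => // /andP[/eqP er /eqP es]; by rewrite er es in ne.
have vp : Gb_vertex b (u + 2, v + 2) by rewrite /Gb_vertex /inL /= vis !addn_gt0 !orbT.
have vq : Gb_vertex b (1, 1).
  rewrite /Gb_vertex /inL /=; apply/bvisibleP => // k k1 kd _.
  by move: (dvdn_leq (ltn0Sn 0) kd); rewrite leqNgt k1.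
have [s [pth lst]] := Hconn _ _ vp vq.
case: s pth lst => [|[x1 x2] s] /=.
  by move=> _ [e1 _]; move: e1; lia.
move=> /andP[e _] _; move: e; rewrite /Gb_edge => /and3P[_ vx ud].
move: vx; rewrite /Gb_vertex /= => /andP[_ vx].
move: ud; rewrite /unit_dist /=.
case/orP => /andP[/eqP e1 /orP[/eqP e2|/eqP e2]].
- have ex2 : x2 = v + 1 by lia.
  by rewrite -e1 ex2 in vx; move: vx; apply/negP; apply: inv.
- have ex2 : x2 = v + 3 by lia.
  by rewrite -e1 ex2 in vx; move: vx; apply/negP; apply: inv.
- have ex1 : x1 = u + 1 by lia.
  by rewrite -e1 ex1 in vx; move: vx; apply/negP; apply: inv.
- have ex1 : x1 = u + 3 by lia.
  by rewrite -e1 ex1 in vx; move: vx; apply/negP; apply: inv.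
Qed.

Theorem mainTheorem8 (b : nat) (hb : 0 < b) :
  (forall (w : nat) (P : pattern), 0 < w ->
     crosses_and_one_circle b w P -> realizable b w P) /\
  ~ Gb_connected b.
Proof.
split; last exact: part2.
move=> w P w0 Hc; exact: (@part1 b hb w P w0 Hc).
Qed.
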